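(* For all integers $n \geq k \geq 1$, under the natural bi-partition of inputs (Alice holds $x \in \{0,1\}^n$, Bob holds $y \in \{0,1\}^k$), $R(\operatorname{SSD}_{n,k}) = \Omega(\log k)$.
   Context: $\operatorname{SSD}_{n,k} : \{0,1\}^n \times \{0,1\}^k \to \{0,1\}$ is $1$ iff $y$ is a subsequence of $x$ (there exist indices $i_1 < \dots < i_k$ with $x_{i_j} = y_j$). $R(f)$ is the minimum worst-case number of bits exchanged by a randomized two-party protocol computing $f$ with error probability at most $1/3$ on every input. *)

(* Defs.v *)
From HB Require Import structures.
From mathcomp Require Import all_boot all_order all_algebra.
From Stdlib Require Import Rdefinitions.
From mathcomp Require Import Rstruct.

Set Implicit Arguments.
Unset Strict Implicit.
Unset Printing Implicit Defensive.

Import Order.TTheory GRing.Theory Num.Theory.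

Definition SSD (n k : nat) (x : n.-tuple bool) (y : k.-tuple bool) : bool :=
  subseq (y : seq bool) (x : seq bool).

(* At an Alice node, Alice sends the bit msg x and the protocol continues
   in the corresponding subtree (false -> first, true -> second);
   symmetrically at Bob nodes. *)
Inductive proto (X Y : Type) : Type :=
  | PLeaf of bool
  | PAlice of (X -> bool) & proto X Y & proto X Y
  | PBob of (Y -> bool) & proto X Y & proto X Y.

Arguments PLeaf {X Y}.

Fixpoint depth X Y (P : proto X Y) : nat :=
  match P with
  | PLeaf _ => 0
  | PAlice _ P0 P1 => (maxn (depth P0) (depth P1)).+1
  | PBob _ P0 P1 => (maxn (depth P0) (depth P1)).+1
  end.

Fixpoint run X Y (P : proto X Y) (x : X) (y : Y) : bool :=
  match P with
  | PLeaf b => b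
  | PAlice m P0 P1 => if m x then run P1 x y else run P0 x y
  | PBob m P0 P1 => if m y then run P1 x y else run P0 x y
  end.

Local Open Scope ring_scope.

Definition is_distr (T : finType) (p : T -> Rdefinitions.R) : Prop :=
  (forall t, 0 <= p t) /\ \sum_(t : T) p t = 1.

(* Private-coin randomized protocol: Alice's private randomness a : RA is
   drawn from pA, Bob's b : RB from pB, independently; the protocol is a
   deterministic protocol on inputs (x, a) and (y, b). *)
Definition computes_with_error_third (X Y : Type) (f : X -> Y -> bool)
    (RA RB : finType) (pA : RA -> Rdefinitions.R) (pB : RB -> Rdefinitions.R)
    (P : proto (X * RA) (Y * RB)) : Prop :=
  is_distr pA /\ is_distr pB /\
  forall x y,
    (\sum_(a : RA) \sum_(b : RB)
        pA a * pB b * (run P (x, a) (y, b) != f x y)%:R <= 1 / 3).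

Definition R_le (X Y : Type) (f : X -> Y -> bool) (c : nat) : Prop :=
  exists (RA RB : finType) (pA : RA -> Rdefinitions.R) (pB : RB -> Rdefinitions.R)
         (P : proto (X * RA) (Y * RB)),
    computes_with_error_third f pA pB P /\ leq (depth P) c.

(* Main.v *)
Require Import Defs.
From HB Require Import structures.
From mathcomp Require Import all_boot all_order all_algebra.
From Stdlib Require Import Rdefinitions.
From mathcomp Require Import Rstruct.
From mathcomp Require Import ring lra zify.

Set Implicit Arguments.
Unset Strict Implicit.
Unset Printing Implicit Defensive.
Import Order.TTheory GRing.Theory Num.Theory.

Module Aux.
Lemma subseq_pad (t t' : seq bool) r : size t = size t' ->
  subseq (rcons t true) (rcons t' true ++ nseq r false) -> t = t'.
Proof.
move=> st /subseqP [m sm E].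
have sm1 : size (take (size (rcons t' true)) m) = size (rcons t' true).
  by rewrite size_take sm size_cat ltn_neqAle leq_addr andbT; case: ifP => // /negbFE /eqP <-.
move: E; rewrite -(cat_take_drop (size (rcons t' true)) m) mask_cat //.
set u := mask _ (nseq r false); set v := mask _ (rcons t' true) => E.
have Hu : forall b, b \in u -> b = false.
  by move=> b /mem_mask; rewrite mem_nseq => /andP [_ /eqP].
have u0 : u = [::].
  case/lastP: u E Hu => // u' b.
  rewrite -rcons_cat => /rcons_inj [_ <-] /(_ true).
  by rewrite mem_rcons mem_head => /(_ isT).
move: E; rewrite u0 cats0 => E.
have : subseq (rcons t true) (rcons t' true) by rewrite E mask_subseq.
move/size_subseq_leqif => [_]; rewrite !size_rcons st eqxx => /esym/eqP.
by move/rcons_inj => [].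
Qed.

Fixpoint rects X Y (P : proto X Y) : seq ((X -> bool) * (Y -> bool)) :=
  match P with
  | PLeaf b => if b then [:: (fun _ => true, fun _ => true)] else [::]
  | PAlice m P0 P1 =>
      [seq (fun x => ~~ m x && r.1 x, r.2) | r <- rects P0] ++
      [seq (fun x => m x && r.1 x, r.2) | r <- rects P1]
  | PBob m P0 P1 =>
      [seq (r.1, fun y => ~~ m y && r.2 y) | r <- rects P0] ++
      [seq (r.1, fun y => m y && r.2 y) | r <- rects P1]
  end.

Lemma run_rects X Y (P : proto X Y) x y :
  (run P x y : nat) = \sum_(r <- rects P) (r.1 x && r.2 y).
Proof.
elim: P => [b|m P0 IH0 P1 IH1|m P0 IH0 P1 IH1] /=.
- by case: b; rewrite ?big_nil ?big_seq1.
- rewrite big_cat !big_map /=; case: (m x) => /=.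
  + by rewrite big1 ?add0n ?IH1 // => r; rewrite /= andbF.
  + by rewrite [X in _ + X]big1 ?addn0 ?IH0 // => r.
- rewrite big_cat !big_map /=; case: (m y) => /=.
  + by rewrite big1 ?add0n ?IH1 // => r _; rewrite andbF.
  + by rewrite [X in _ + X]big1 ?addn0 ?IH0 // => r _; rewrite andbF.
Qed.

Lemma size_rects X Y (P : proto X Y) : leq (size (rects P)) (expn 2 (depth P)).
Proof.
elim: P => [b|m P0 IH0 P1 IH1|m P0 IH0 P1 IH1]; first by case: b.
- simpl rects; simpl depth. rewrite size_cat !size_map expnS mul2n -addnn.
  apply: leq_add; [apply: leq_trans IH0 _|apply: leq_trans IH1 _];
   apply: leq_pexp2l => //; by rewrite ?leq_maxl ?leq_maxr.
- simpl rects; simpl depth. rewrite size_cat !size_map expnS mul2n -addnn.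
  apply: leq_add; [apply: leq_trans IH0 _|apply: leq_trans IH1 _];
   apply: leq_pexp2l => //; by rewrite ?leq_maxl ?leq_maxr.
Qed.

Local Open Scope ring_scope.

Definition wsum (T : finType) (X : Type) (p : T -> R) (A : X * T -> bool) (x : X) : R :=
  \sum_(a : T) p a * (A (x, a) : nat)%:R.

Definition acc X Y (RA RB : finType) (pA : RA -> R) (pB : RB -> R)
  (P : proto (X * RA) (Y * RB)) x y : R :=
  \sum_(a : RA) \sum_(b : RB) pA a * pB b * (run P (x, a) (y, b) : nat)%:R.

Lemma natr_andb (a b : bool) : ((a && b : nat)%:R : R) = (a : nat)%:R * (b : nat)%:R.
Proof. by case: a; case: b; rewrite /= ?mulr1 ?mulr0. Qed.

Lemma acc_rects X Y (RA RB : finType) (pA : RA -> R) (pB : RB -> R)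
  (P : proto (X * RA) (Y * RB)) x y :
  acc pA pB P x y = \sum_(r <- rects P) wsum pA r.1 x * wsum pB r.2 y.
Proof.
rewrite /acc /wsum.
under eq_bigr => a _ do under eq_bigr => b _ do rewrite run_rects natr_sum big_distrr /=.
rewrite exchange_big /=.
under eq_bigr => a _ do rewrite exchange_big /=.
rewrite exchange_big /=; apply: eq_bigr => r _.
rewrite exchange_big /=.
rewrite big_distrl /=; apply: eq_bigr => a _.
rewrite big_distrr /=; apply: eq_bigr => b _.
rewrite natr_andb; ring.
Qed.

Lemma sum_prod (RA RB : finType) (pA : RA -> R) (pB : RB -> R) :
  is_distr pA -> is_distr pB -> \sum_(a : RA) \sum_(b : RB) pA a * pB b = 1.
Proof.
move=> [_ hA] [_ hB].
under eq_bigr => a _ do rewrite -big_distrr /= hB mulr1.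
by [].
Qed.

Lemma wsum_bounds (T : finType) (X : Type) (p : T -> R) (A : X * T -> bool) x :
  is_distr p -> 0 <= wsum p A x <= 1.
Proof.
move=> [h0 h1]; rewrite /wsum; apply/andP; split.
  by apply: sumr_ge0 => a _; apply: mulr_ge0 => //; case: (A _).
apply: (@le_trans _ _ (\sum_t p t)); last by rewrite h1.
apply: ler_sum => a _; case: (A _) => /=; rewrite ?mulr1 ?mulr0 //.
Qed.

Lemma err_bound X Y (f : X -> Y -> bool) (RA RB : finType) (pA : RA -> R) (pB : RB -> R)
  (P : proto (X * RA) (Y * RB)) :
  computes_with_error_third f pA pB P -> forall x y,
  if f x y then 2 / 3 <= acc pA pB P x y else acc pA pB P x y <= 1 / 3.
Proof.
move=> [hA [hB H]] x y; have := H x y; have := sum_prod hA hB.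
rewrite /acc; case: (f x y) => S.
  have -> : \sum_a \sum_b pA a * pB b * (run P (x, a) (y, b) != true)%:R =
    \sum_(a : RA) \sum_(b : RB) pA a * pB b - \sum_a \sum_b pA a * pB b * (run P (x, a) (y, b) : nat)%:R.
    rewrite -sumrB; apply: eq_bigr => a _; rewrite -sumrB; apply: eq_bigr => b _.
    by case: (run _ _ _) => /=; ring.
  rewrite S; lra.
have -> // : \sum_a \sum_b pA a * pB b * (run P (x, a) (y, b) != false)%:R =
  \sum_a \sum_b pA a * pB b * (run P (x, a) (y, b) : nat)%:R.
by apply: eq_bigr => a _; apply: eq_bigr => b _; case: (run _ _ _).
Qed.

Definition mkx n k (t : (k.-1).-tuple bool) : n.-tuple bool :=
  insubd (nseq_tuple n false) (rcons t true ++ nseq (subn n k) false).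
Definition mky k (t : (k.-1).-tuple bool) : k.-tuple bool :=
  insubd (nseq_tuple k false) (rcons t true).

Lemma mkxE n k t : (1 <= k)%nat -> (k <= n)%nat -> val (@mkx n k t) = rcons t true ++ nseq (subn n k) false.
Proof.
move=> k1 kn; rewrite /mkx insubdK // unfold_in /= size_cat size_rcons size_nseq size_tuple.
by rewrite prednK // subnKC.
Qed.
Lemma mkyE k t : (1 <= k)%nat -> val (@mky k t) = rcons t true.
Proof. by move=> k1; rewrite /mky insubdK // unfold_in /= size_rcons size_tuple prednK. Qed.

Lemma count_bound n k (RA RB : finType) (pA : RA -> R) (pB : RB -> R)
  (P : proto (n.-tuple bool * RA) (k.-tuple bool * RB)) :
  (1 <= k)%nat -> (k <= n)%nat -> computes_with_error_third (@SSD n k) pA pB P ->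
  leq (expn 2 k.-1) (expn (addn (muln 3 (size (rects P))) 4) (size (rects P))).
Proof.
move=> k1 kn HP; have [hA [hB _]] := HP.
set L := size (rects P); set M := (3 * L + 3)%nat.
pose sg (t : (k.-1).-tuple bool) : L.-tuple 'I_M.+1 :=
  map_tuple (fun r => inord (Num.truncn (wsum pA r.1 (mkx n t) * M%:R))) (in_tuple (rects P)).
have inj : injective sg.
  move=> t1 t2 E; apply/eqP/negPn/negP => ne.
  pose y := mky t1.
  have S1 : SSD (mkx n t1) y by rewrite /SSD mkxE // mkyE // prefix_subseq.
  have S2 : SSD (mkx n t2) y = false.
    apply/negP; rewrite /SSD mkxE // mkyE // => /subseq_pad.
    by rewrite !size_tuple => /(_ erefl) /val_inj /eqP; rewrite (negbTE ne).
  have := err_bound HP (mkx n t1) y; rewrite S1 => A1.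
  have := err_bound HP (mkx n t2) y; rewrite S2 => A2.
  pose rr := tnth (in_tuple (rects P)).
  have key : forall i : 'I_L,
      wsum pA (rr i).1 (mkx n t1) * M%:R <= wsum pA (rr i).1 (mkx n t2) * M%:R + 1.
    move=> i.
    have := congr1 (fun s => tnth s i) E; rewrite /sg !tnth_map => /(congr1 val).
    have lt : forall t : (k.-1).-tuple bool, (Num.truncn (wsum pA (rr i).1 (mkx n t) * M%:R) < M.+1)%nat.
      move=> t; rewrite ltnS truncn_le_nat.
      have /andP [h0 h1] := wsum_bounds (rr i).1 (mkx n t) hA.
      have hM : (0 : R) <= M%:R by [].
      have : wsum pA (rr i).1 (mkx n t) * M%:R <= M%:R.
        by rewrite -{2}(mul1r M%:R); apply: ler_wpM2r.
      rewrite -addn1 natrD; lra.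
    rewrite /= -/rr !inordK ?lt // => Et.
    have g1 := truncnS_gt (wsum pA (rr i).1 (mkx n t1) * M%:R).
    have /andP [h0 _] := wsum_bounds (rr i).1 (mkx n t2) hA.
    have g2 : ((Num.truncn (wsum pA (rr i).1 (mkx n t2) * M%:R))%:R : R)
       <= wsum pA (rr i).1 (mkx n t2) * M%:R.
      by rewrite truncn_le; apply: mulr_ge0.
    move: g1; rewrite Et -addn1 natrD; lra.
  have H1 : M%:R * acc pA pB P (mkx n t1) y <= M%:R * acc pA pB P (mkx n t2) y + L%:R.
    rewrite !acc_rects !(big_tnth _ _ (rects P)) !mulr_sumr.
    have -> : (L%:R : R) = \sum_(i < L) 1 by rewrite sumr_const card_ord.
    rewrite -big_split /=; apply: ler_sum => i _.
    have := key i; rewrite -/rr.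
    set a1 := wsum _ _ (mkx n t1); set a2 := wsum _ _ (mkx n t2); set b := wsum _ _ y.
    have /andP [b0 b1] : 0 <= b <= 1 := wsum_bounds (rr i).2 y hB.
    move=> K; have h : a1 * M%:R * b <= (a2 * M%:R + 1) * b := ler_wpM2r b0 K.
    rewrite mulrDl mul1r in h.
    have -> : M%:R * (a1 * b) = a1 * M%:R * b by ring.
    have -> : M%:R * (a2 * b) = a2 * M%:R * b by ring.
    lra.
  have hM : (0 : R) <= M%:R by [].
  have B1 : M%:R * (2 / 3) <= M%:R * acc pA pB P (mkx n t1) y by apply: ler_wpM2l.
  have B2 : M%:R * acc pA pB P (mkx n t2) y <= M%:R * (1 / 3) by apply: ler_wpM2l.
  move: B1 B2 H1; rewrite /M natrD natrM; lra.
have := @leq_card _ _ sg inj; rewrite !card_tuple card_bool card_ord.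
move=> h; have e : M.+1 = (3 * L + 4)%nat by rewrite /M !addnS.
by rewrite -e.
Qed.

Close Scope ring_scope.

Lemma arith_bound (c k L : nat) : (1 <= c)%nat -> leq L (expn 2 c) ->
  leq (expn 2 k.-1) (expn (addn (muln 3 L) 4) L) -> leq k (expn 2 (addn (addn c c) 2)).
Proof.
move=> c1 hL h.
set X := expn 2 c.
have cX : (c < X)%nat by apply: ltn_expl.
have X1 : (1 <= X)%nat by rewrite expn_gt0.
have h2 : leq (expn (addn (muln 3 L) 4) L) (expn (addn (muln 3 X) 4) X).
  case: (posnP L) => [->|Lp]; first by rewrite expn0 expn_gt0 addn4.
  apply: (@leq_trans (expn (addn (muln 3 X) 4) L)).
    by rewrite leq_exp2r // leq_add2r leq_mul2l hL orbT.
  by apply: leq_pexp2l => //; rewrite addn4.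
have h3 : leq (expn (addn (muln 3 X) 4) X) (expn 2 (muln (addn c 3) X)).
  rewrite expnM leq_exp2r // expnD.
  rewrite -/X; have -> : expn 2 3 = 8 by []. lia.
have : leq (expn 2 k.-1) (expn 2 (muln (addn c 3) X)) by apply: leq_trans h (leq_trans h2 h3).
rewrite leq_exp2l // => h4.
have : (k <= 4 * (X * X))%nat.
  have : ((c+3)*X <= (X+2)*X)%nat by apply: leq_mul; lia.
  nia.
by rewrite !expnD -/X expnS expn1; lia.
Qed.

End Aux.
Import Aux.

Theorem mainTheorem7 :
  exists C : nat, forall n k c : nat,
    (1 <= k)%N -> (k <= n)%N ->
    R_le (@SSD n k) c ->
    (trunc_log 2 k <= C * c)%N.
Proof.
exists 4 => n k c k1 kn [RA [RB [pA [pB [P [HP dP]]]]]].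
case: (posnP c) => [c0|cpos].
  exfalso; move: dP HP; rewrite c0.
  case: P => [b|m P0 P1|m P0 P1] //= _ HP.
  set t := nseq_tuple k.-1 false.
  have S1 : SSD (mkx n t) (mky t) by rewrite /SSD mkxE // mkyE // prefix_subseq.
  have S2 : SSD (nseq_tuple n false) (mky t) = false.
    apply/negP; rewrite /SSD mkyE // => /mem_subseq /(_ true).
    by rewrite mem_rcons mem_head /= mem_nseq andbF => /(_ isT).
  have := err_bound HP (mkx n t) (mky t); rewrite S1.
  have := err_bound HP (nseq_tuple n false) (mky t); rewrite S2.
  rewrite /acc /=; lra.
have hb := count_bound k1 kn HP.
have hL : leq (size (rects P)) (expn 2 c).
  by apply: leq_trans (size_rects P) _; apply: leq_pexp2l.
have hk := arith_bound cpos hL hb.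
have k0 : (0 < k)%nat by [].
have := trunc_logP (isT : (1 < 2)%nat) k0.
move=> /leq_trans /(_ hk); rewrite leq_exp2l // => h.
lia.
Qed.
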